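(* Let $H$ be a connected bipartite graph on $h$ vertices. If $\mathrm{ex}(n,H)=\Omega(n^{1+\alpha})$ for some $\alpha\in(0,1)$, then for all integers $n\ge s\ge h$ we have $\mathrm{ex}^*(n,H,s)=\Omega_h(s^{1-\alpha}n^{1+\alpha})$.
   Context: $\mathrm{ex}(n,H)$ is the maximum number of edges in an $n$-vertex graph containing no copy of $H$ as a subgraph. For a positive integer $s$, $\mathrm{ex}^*(n,H,s)$ is the maximum number of edges in an $n$-vertex graph containing no copy of $K_{s,s}$ as a subgraph and no induced copy of $H$. The notation $\Omega_h(\cdot)$ means the implied positive constant may depend on $h$ (and on $H$), but not on $n$ or $s$. *)

(* Defs.v *)
From mathcomp Require Import all_boot.
Set Implicit Arguments. Unset Strict Implicit. Unset Printing Implicit Defensive.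

Definition simple_graph (T : finType) (E : {set {set T}}) : bool :=
  [forall e in E, #|e| == 2].

Definition adj (T : finType) (E : {set {set T}}) (x y : T) : bool :=
  [set x; y] \in E.

Definition connected_graph (T : finType) (E : {set {set T}}) : Prop :=
  forall x y : T, connect (adj E) x y.

Definition bipartite_graph (T : finType) (E : {set {set T}}) : Prop :=
  exists c : T -> bool, forall x y : T, adj E x y -> c x != c y.

Definition has_copy (V : finType) (EH : {set {set V}}) n (E : {set {set 'I_n}}) : bool :=
  [exists f : {ffun V -> 'I_n}, injectiveb f &&
     [forall x, forall y, adj EH x y ==> adj E (f x) (f y)]].

Definition has_induced_copy (V : finType) (EH : {set {set V}}) n (E : {set {set 'I_n}}) : bool :=
  [exists f : {ffun V -> 'I_n}, injectiveb f &&
     [forall x, forall y, (x != y) ==> (adj EH x y == adj E (f x) (f y))]].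

Definition has_Kss n (E : {set {set 'I_n}}) (s : nat) : bool :=
  [exists A : {set 'I_n}, exists B : {set 'I_n},
     [&& #|A| == s, #|B| == s, [disjoint A & B] &
         [forall a in A, forall b in B, adj E a b]]].

Definition ex (n : nat) (V : finType) (EH : {set {set V}}) : nat :=
  \max_(E : {set {set 'I_n}} | simple_graph E && ~~ has_copy EH E) #|E|.

Definition exstar (n : nat) (V : finType) (EH : {set {set V}}) (s : nat) : nat :=
  \max_(E : {set {set 'I_n}} |
          [&& simple_graph E, ~~ has_Kss E s & ~~ has_induced_copy EH E]) #|E|.

(* Main.v *)
Require Import Defs.
From mathcomp Require Import all_boot.
From Stdlib Require Import Reals.
From mathcomp Require Import zify.
Set Implicit Arguments. Unset Strict Implicit.

Lemma adj_sym (T : finType) (E : {set {set T}}) x y : adj E x y = adj E y x.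
Proof. by rewrite /adj setUC. Qed.

Lemma path_exit (T : finType) (e : rel T) (S : pred T) x p :
  path e x p -> S x -> ~~ S (last x p) -> exists u z, [/\ S u, ~~ S z & e u z].
Proof.
elim: p x => [|y p IH] x /=; first by move=> _ Sx; rewrite Sx.
case/andP=> exy py Sx Sl.
case Sy: (S y); first exact: (IH y py Sy Sl).
by exists x, y; rewrite Sy.
Qed.

Lemma connect_exit (T : finType) (e : rel T) (S : pred T) x w :
  connect e x w -> S x -> ~~ S w -> exists u z, [/\ S u, ~~ S z & e u z].
Proof. by case/connectP=> p pp ->; apply: path_exit pp. Qed.

Lemma has_nb (V : finType) (EH : {set {set V}}) x w :
  connected_graph EH -> x != w -> exists z, adj EH x z.
Proof.
move=> cH xw.
have wx : ~~ pred1 x w by rewrite /= eq_sym.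
have [u [z [/eqP -> _ e]]] := @connect_exit _ _ (pred1 x) x w (cH x w) (eqxx x) wx.
by exists z.
Qed.

Lemma third_nb (V : finType) (EH : {set {set V}}) x y w :
  connected_graph EH -> w != x -> w != y ->
  exists z, [/\ z != x, z != y & adj EH x z || adj EH y z].
Proof.
move=> cH wx wy.
pose S := [pred v | (v == x) || (v == y)].
have Sx : S x by rewrite /= eqxx.
have Sw : ~~ S w by rewrite /= negb_or wx wy.
have [u [z [Su Sz e]]] := @connect_exit _ _ S x w (cH x w) Sx Sw.
move: Sz; rewrite /= negb_or => /andP[zx zy].
exists z; split=> //.
by case/orP: Su => /eqP <-; rewrite e ?orbT.
Qed.

Lemma set2_eq (T : finType) (i j i' j' : T) :
  [set i; j] = [set i'; j'] -> i' != j' ->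
  (i = i' /\ j = j') \/ (i = j' /\ j = i').
Proof.
move=> E ne.
have : i \in [set i'; j'] by rewrite -E !inE eqxx.
have : j \in [set i'; j'] by rewrite -E !inE eqxx orbT.
have : i' \in [set i; j] by rewrite E !inE eqxx.
have : j' \in [set i; j] by rewrite E !inE eqxx orbT.
rewrite !inE.
case/orP=> /eqP h1; case/orP=> /eqP h2; case/orP=> /eqP h3; case/orP=> /eqP h4; subst;
  try by left. all: try by right.
all: by move: ne; rewrite eqxx.
Qed.

Definition blR (m' t : nat) (EG : {set {set 'I_m'.+1}}) (i j : nat) : bool :=
  [&& i < m'.+1 * t, j < m'.+1 * t &
      (i %/ t == j %/ t) || adj EG (inord (i %/ t)) (inord (j %/ t))].

Definition blowup (n m' t : nat) (EG : {set {set 'I_m'.+1}}) : {set {set 'I_n}} :=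
  [set e : {set 'I_n} | [exists i : 'I_n, exists j : 'I_n,
      [&& e == [set i; j], i != j & blR t EG i j]]].

Lemma blR_sym m' t (EG : {set {set 'I_m'.+1}}) i j : blR t EG i j = blR t EG j i.
Proof.
rewrite /blR adj_sym eq_sym.
by case: (i < _); case: (j < _).
Qed.

Lemma adj_blowup n m' t (EG : {set {set 'I_m'.+1}}) (i j : 'I_n) :
  adj (blowup n t EG) i j = (i != j) && blR t EG i j.
Proof.
rewrite /adj /blowup inE.
apply/existsP/idP.
  case=> i' /existsP [j' /and3P [/eqP E ne R]].
  case: (set2_eq E ne) => [[-> ->]|[-> ->]]; first by rewrite ne.
  by rewrite eq_sym ne blR_sym.
case/andP=> ne R; exists i; apply/existsP; exists j.
by rewrite eqxx ne R.
Qed.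

Lemma blowup_simple n m' t (EG : {set {set 'I_m'.+1}}) : simple_graph (blowup n t EG).
Proof.
apply/forall_inP => e; rewrite inE => /existsP [i /existsP [j /and3P [/eqP -> ne _]]].
by rewrite cards2 ne.
Qed.

Lemma copy_of_biclique (V : finType) (EH : {set {set V}}) n' (E : {set {set 'I_n'.+1}})
  (X Y : {set 'I_n'.+1}) :
  bipartite_graph EH -> [disjoint X & Y] -> #|V| <= #|X| -> #|V| <= #|Y| ->
  (forall u v, u \in X -> v \in Y -> adj E u v) -> has_copy EH E.
Proof.
move=> [c cP] dXY hX hY cXY.
pose iX (v : V) := nth ord0 (enum X) (enum_rank v).
pose iY (v : V) := nth ord0 (enum Y) (enum_rank v).
have rX (v : V) : enum_rank v < size (enum X) by rewrite -cardE; exact: (leq_trans (ltn_ord (enum_rank v)) hX).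
have rY (v : V) : enum_rank v < size (enum Y) by rewrite -cardE; exact: (leq_trans (ltn_ord (enum_rank v)) hY).
have iXin (v : V) : iX v \in X by rewrite -mem_enum mem_nth.
have iYin (v : V) : iY v \in Y by rewrite -mem_enum mem_nth.
pose f (v : V) := if c v then iX v else iY v.
apply/existsP; exists [ffun v => f v]; apply/andP; split.
  apply/injectiveP => x y; rewrite !ffunE /f.
  case cx: (c x); case cy: (c y) => E1.
  - apply: enum_rank_inj; apply/val_inj/eqP.
    by rewrite -(nth_uniq ord0 (rX x) (rX y) (enum_uniq _)); apply/eqP.
  - by move: (disjointFr dXY (iXin x)); rewrite E1 iYin.
  - by move: (disjointFr dXY (iXin y)); rewrite -E1 iYin.
  - apply: enum_rank_inj; apply/val_inj/eqP.
    by rewrite -(nth_uniq ord0 (rY x) (rY y) (enum_uniq _)); apply/eqP.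
apply/forallP => x; apply/forallP => y; apply/implyP => exy.
have := cP x y exy; rewrite !ffunE /f.
case: (c x); case: (c y) => //= _; first exact: cXY.
by rewrite adj_sym; apply: cXY.
Qed.

Definition cls n m' t (i : 'I_n) : 'I_m'.+1 := inord (i %/ t).

Lemma cls_val n m' t (i : 'I_n) : i < m'.+1 * t -> (cls m' t i : nat) = i %/ t.
Proof.
move=> hi; rewrite /cls inordK //.
have t0 : 0 < t by case: t hi => //; rewrite muln0.
by rewrite ltn_divLR.
Qed.

Lemma card_cls n m' t' (A : {set 'I_n}) :
  (forall a, a \in A -> a < m'.+1 * t'.+1) ->
  #|A| <= #|[set cls m' t'.+1 a | a in A]| * t'.+1.
Proof.
move=> act.
pose g (a : 'I_n) := (cls m' t'.+1 a, (inord (a %% t'.+1) : 'I_t'.+1)).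
have gi : {in A &, injective g}.
  move=> a b aA bA [e1 e2].
  have := congr1 (@nat_of_ord _) e1; rewrite !cls_val ?act // => q.
  have := congr1 (@nat_of_ord _) e2; rewrite !inordK ?ltn_mod // => r.
  by apply: val_inj; rewrite /= (divn_eq a t'.+1) (divn_eq b t'.+1) q r.
rewrite -(card_in_imset gi).
have -> : #|[set cls m' t'.+1 a | a in A]| * t'.+1 =
          #|setX [set cls m' t'.+1 a | a in A] [set: 'I_t'.+1]|.
  by rewrite cardsX cardsT card_ord.
apply: subset_leq_card; apply/subsetP => p /imsetP [a aA ->].
by rewrite inE /= in_setT imset_f.
Qed.

Lemma disjP (T : finType) (A B : {set T}) :
  (forall x, x \in A -> x \in B -> False) -> [disjoint A & B].
Proof.
move=> H; rewrite disjoint_subset; apply/subsetP => x xA; rewrite inE.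
by apply/negP => xB; exact: H x xA xB.
Qed.

Lemma blowup_noKss (V : finType) (EH : {set {set V}}) n' m' t' (EG : {set {set 'I_m'.+1}}) s :
  bipartite_graph EH -> ~~ has_copy EH EG -> #|V| <= s ->
  (t' = 0 \/ 2 * #|V| * t'.+1 <= s) -> ~~ has_Kss (blowup n'.+1 t'.+1 EG) s.
Proof.
move=> bH nH hs ht.
apply/negP => /existsP [A /existsP [B /and4P [/eqP cA /eqP cB dAB /forall_inP cAB]]].
apply: (negP nH).
have [s0 | s_pos] := posnP s.
  apply: (@copy_of_biclique _ _ _ _ set0 set0) => //.
  - by apply: disjP => x; rewrite inE.
  - by rewrite cards0 -s0.
  - by rewrite cards0 -s0.
  - by move=> u v; rewrite inE.
have [b0 b0B] : exists b, b \in B by apply/card_gt0P; rewrite cB.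
have [a0 a0A] : exists a, a \in A by apply/card_gt0P; rewrite cA.
have adjAB a b : a \in A -> b \in B -> adj (blowup n'.+1 t'.+1 EG) a b.
  by move=> aA bB; exact: (forall_inP (cAB a aA)) b bB.
have actA a : a \in A -> a < m'.+1 * t'.+1.
  by move=> aA; have := adjAB a b0 aA b0B; rewrite adj_blowup => /andP[_ /and3P[]].
have actB b : b \in B -> b < m'.+1 * t'.+1.
  by move=> bB; have := adjAB a0 b a0A bB; rewrite adj_blowup => /andP[_ /and3P[]].
set PA := [set cls m' t'.+1 a | a in A].
set PB := [set cls m' t'.+1 b | b in B].
have cP u v : u \in PA -> v \in PB -> u != v -> adj EG u v.
  move=> /imsetP [a aA ->] /imsetP [b bB ->] ne.
  have := adjAB a b aA bB; rewrite adj_blowup => /andP [_ /and3P [_ _ /orP [e|e]]].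
    by move: ne; rewrite /cls (eqP e) eqxx.
  exact: e.
have cardA := card_cls actA; rewrite cA in cardA.
have cardB := card_cls actB; rewrite cB in cardB.
case: ht => [t0 | ht].
  subst t'.
  have dP : [disjoint PA & PB].
    apply: disjP => u /imsetP [a aA ->] /imsetP [b bB e].
    have ab : a = b.
      apply: val_inj; have := congr1 (@nat_of_ord _) e.
        by rewrite (cls_val (actA a aA)) (cls_val (actB b bB)) !divn1.
    by subst b; move: (disjointFr dAB aA); rewrite bB.
  apply: (copy_of_biclique bH dP).
  - by rewrite muln1 in cardA; exact: leq_trans hs cardA.
  - by rewrite muln1 in cardB; exact: leq_trans hs cardB.
  - move=> u v uA vB; apply: cP => //; apply/negP => /eqP e; subst v.
    by move: (disjointFr dP uA); rewrite vB.
set h := #|V|.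
have hPA : 2 * h <= #|PA| by rewrite -(leq_pmul2r (ltn0Sn t')); exact: leq_trans ht cardA.
have hPB : 2 * h <= #|PB| by rewrite -(leq_pmul2r (ltn0Sn t')); exact: leq_trans ht cardB.
pose Y := [set x in take h (enum PB)].
have cY : #|Y| = h.
  rewrite cardsE (card_uniqP _) ?take_uniq ?enum_uniq // size_takel // -cardE.
  by apply: leq_trans hPB; rewrite leq_pmull.
have YPB : Y \subset PB.
  by apply/subsetP => x; rewrite inE => /mem_take; rewrite mem_enum.
have dXY : [disjoint PA :\: Y & Y].
  by apply: disjP => x; rewrite inE => /andP [xY _] xY'; rewrite xY' in xY.
apply: (copy_of_biclique bH dXY).
- rewrite cardsD.
  have : #|PA :&: Y| <= #|Y| by apply: subset_leq_card; apply: subsetIr.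
  rewrite cY => hI; have e : #|V| = h := erefl; rewrite e.
  have h1 : h <= #|PA| - h by move: hPA; lia.
  exact: leq_trans h1 (leq_sub2l _ hI).
- by rewrite cY.
- move=> u v; rewrite inE => /andP [uY uA] vY; apply: cP => //; first exact: (subsetP YPB).
  by apply/eqP => e; subst v; rewrite vY in uY.
Qed.

Lemma adj_neq (T : finType) (E : {set {set T}}) x y :
  simple_graph E -> adj E x y -> x != y.
Proof.
move=> /forall_inP sE a; apply/eqP => e; subst y.
by have := sE _ a; rewrite setUid cards1.
Qed.

Lemma blowup_noind (V : finType) (EH : {set {set V}}) n' m' t' (EG : {set {set 'I_m'.+1}}) :
  simple_graph EH -> connected_graph EH -> bipartite_graph EH -> 2 < #|V| ->
  ~~ has_copy EH EG -> ~~ has_induced_copy EH (blowup n'.+1 t'.+1 EG).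
Proof.
move=> sH cH [c cP] h3 nH.
apply/negP => /existsP [f /andP [/injectiveP fi /forallP fa]].
apply: (negP nH).
set E' := blowup n'.+1 t'.+1 EG.
have fadj x y : x != y -> adj EH x y = adj E' (f x) (f y).
  by move=> ne; apply/eqP; exact: (implyP (forallP (fa x) y) ne).
have other (x : V) : exists w, w != x.
  have : 0 < #|[set~ x]| by rewrite cardsC1; lia.
  by case/card_gt0P => w; rewrite !inE => wx; exists w.
have act (x : V) : f x < m'.+1 * t'.+1.
  have [w wx] := other x.
  have xw : x != w by rewrite eq_sym.
  have [z xz] := @has_nb _ _ x w cH xw.
  have := xz; rewrite fadj ?(adj_neq sH xz) // adj_blowup.
  by case/andP=> _ /and3P [].
pose g (x : V) := cls m' t'.+1 (f x).
have gval x : (g x : nat) = f x %/ t'.+1 by rewrite cls_val.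
have gi : injective g.
  move=> x y e; apply/eqP; apply/negP => /negP ne.
  have q : f x %/ t'.+1 = f y %/ t'.+1 by rewrite -!gval e.
  have fne : f x != f y by apply/negP => /eqP /fi exy; rewrite exy eqxx in ne.
  have axy : adj EH x y by rewrite fadj // adj_blowup fne /blR !act q eqxx.
  have : 0 < #|~: [set x; y]|.
    have := cardsC [set x; y]; have := cards2 x y; rewrite ne /= => h2 hc; move: h3; rewrite -hc h2; lia.
  case/card_gt0P => w; rewrite !inE negb_or => /andP [wx wy].
  have [z [zx zy azxy]] := third_nb cH wx wy.
  have twin : adj EH z x = adj EH z y.
    rewrite !fadj // !adj_blowup.
    have -> : f z != f x by apply/negP => /eqP /fi e'; rewrite e' eqxx in zx.
    have -> : f z != f y by apply/negP => /eqP /fi e'; rewrite e' eqxx in zy.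
    by rewrite /blR !act q.
  have azx : adj EH z x by case/orP: azxy; [rewrite adj_sym | rewrite twin adj_sym].
  have azy : adj EH z y by rewrite -twin.
  move: (cP x y axy) (cP z x azx) (cP z y azy).
  by case: (c x); case: (c y); case: (c z).
apply/existsP; exists [ffun x => g x]; apply/andP; split.
  by apply/injectiveP => x y; rewrite !ffunE => /gi.
apply/forallP => x; apply/forallP => y; apply/implyP => axy; rewrite !ffunE.
have ne := adj_neq sH axy.
move: axy; rewrite fadj // adj_blowup => /andP [_ /and3P [_ _ /orP [e|//]]].
have : g x = g y by rewrite /g /cls (eqP e).
by move/gi => exy; rewrite exy eqxx in ne.
Qed.

Definition emb n' m' t' (u : 'I_m'.+1) (a : 'I_t'.+1) : 'I_n'.+1 := inord (u * t'.+1 + a).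

Lemma emb_lt m' t' (u : 'I_m'.+1) (a : 'I_t'.+1) : u * t'.+1 + a < m'.+1 * t'.+1.
Proof.
have := ltn_ord u; have := ltn_ord a => ha hu.
apply: (@leq_trans (u.+1 * t'.+1)); first by rewrite mulSn addnC ltn_add2r.
by rewrite leq_mul2r hu orbT.
Qed.

Lemma emb_val n' m' t' (u : 'I_m'.+1) (a : 'I_t'.+1) :
  m'.+1 * t'.+1 <= n'.+1 -> (emb n' u a : nat) = u * t'.+1 + a.
Proof. by move=> h; rewrite /emb inordK // (leq_trans (emb_lt u a)). Qed.

Lemma emb_div m' t' (u : 'I_m'.+1) (a : 'I_t'.+1) : (u * t'.+1 + a) %/ t'.+1 = u.
Proof. by rewrite divnMDl // divn_small ?addn0. Qed.

Lemma emb_mod m' t' (u : 'I_m'.+1) (a : 'I_t'.+1) : (u * t'.+1 + a) %% t'.+1 = a.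
Proof. by rewrite modnMDl modn_small. Qed.

Lemma emb_inj n' m' t' (u v : 'I_m'.+1) (a b : 'I_t'.+1) :
  m'.+1 * t'.+1 <= n'.+1 -> emb n' u a = emb n' v b -> u = v /\ a = b.
Proof.
move=> h e; have := congr1 (@nat_of_ord _) e; rewrite !emb_val // => e'.
split; apply: val_inj.
  by rewrite /= -(emb_div u a) e' emb_div.
by rewrite /= -(emb_mod u a) e' emb_mod.
Qed.

Lemma blowup_card n' m' t' (EG : {set {set 'I_m'.+1}}) :
  simple_graph EG -> m'.+1 * t'.+1 <= n'.+1 ->
  #|EG| * (t'.+1 * t'.+1) <= #|blowup n'.+1 t'.+1 EG|.
Proof.
move=> /forall_inP sG hmn.
pose S := [set p : 'I_m'.+1 * 'I_m'.+1 | (p.1 < p.2) && adj EG p.1 p.2].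
have hS : #|EG| <= #|S|.
  apply: (@leq_trans #|[set [set p.1; p.2] | p in S]|); last exact: leq_imset_card.
  apply: subset_leq_card; apply/subsetP => e eG.
  have /cards2P [x [y [ne E]]] := sG e eG; subst e.
  have [lt|gt|eq] := ltngtP x y.
  - by apply/imsetP; exists (x, y) => //; rewrite inE /= lt /adj eG.
  - apply/imsetP; exists (y, x); last by rewrite /= setUC.
    by rewrite inE /= gt /adj setUC eG.
  - by move: ne; rewrite (val_inj eq) eqxx.
pose D := setX S [set: 'I_t'.+1 * 'I_t'.+1].
pose phi (q : ('I_m'.+1 * 'I_m'.+1) * ('I_t'.+1 * 'I_t'.+1)) : {set 'I_n'.+1} :=
  [set emb n' q.1.1 q.2.1; emb n' q.1.2 q.2.2].
have hD : #|D| = #|S| * (t'.+1 * t'.+1) by rewrite cardsX cardsT card_prod card_ord.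
have neq (u v : 'I_m'.+1) (a b : 'I_t'.+1) : u < v -> emb n' u a != emb n' v b.
  move=> uv; apply/negP => /eqP e0; have [e _] := emb_inj hmn e0; subst v.
  by rewrite ltnn in uv.
have phiI : {in D &, injective phi}.
  move=> [[u1 v1] [a1 b1]] [[u2 v2] [a2 b2]]; rewrite !inE /= !andbT.
  move=> /andP [l1 _] /andP [l2 _] e.
  case: (set2_eq e (neq _ _ _ _ l2)) => [[e1 e2]|[e1 e2]];
    have [x1 y1] := emb_inj hmn e1; have [x2 y2] := emb_inj hmn e2;
    rewrite /= in x1 y1 x2 y2; subst => //.
  by have := ltn_trans l1 l2; rewrite ltnn.
rewrite (leq_trans (leq_mul hS (leqnn _))) // -hD -(card_in_imset phiI).
apply: subset_leq_card; apply/subsetP => e /imsetP [[[u v] [a b]] qD ->].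
move: qD; rewrite !inE /= !andbT => /andP [uv auv].
apply/existsP; exists (emb n' u a); apply/existsP; exists (emb n' v b).
rewrite eqxx neq //= /blR !emb_val // !emb_lt !emb_div /=.
by rewrite !inord_val auv orbT.
Qed.

Definition E0 k : {set {set 'I_k.+2}} := [set [set ord0; ord_max]].

Lemma E0_simple k : simple_graph (E0 k).
Proof. by apply/forall_inP => e; rewrite inE => /eqP ->; rewrite cards2. Qed.

Lemma E0_card k : #|E0 k| = 1.
Proof. by rewrite cards1. Qed.

Lemma E0_free (V : finType) (EH : {set {set V}}) k :
  simple_graph EH -> connected_graph EH -> 2 < #|V| -> ~~ has_copy EH (E0 k).
Proof.
move=> sH cH h3; apply/negP => /existsP [f /andP [/injectiveP fi /forallP fa]].
have other (x : V) : exists w, w != x.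
  have : 0 < #|[set~ x]| by rewrite cardsC1; lia.
  by case/card_gt0P => w; rewrite !inE => wx; exists w.
have sub : [set f x | x in [set: V]] \subset [set ord0; ord_max].
  apply/subsetP => _ /imsetP [x _ ->].
  have [w wx] := other x; have xw : x != w by rewrite eq_sym.
  have [z xz] := has_nb cH xw.
  have := implyP (forallP (fa x) z) xz; rewrite /adj inE => /eqP e.
  by rewrite -e !inE eqxx.
have := subset_leq_card sub; rewrite card_in_imset; last by move=> x y _ _; apply: fi.
rewrite cardsT cards2.
have -> : (ord0 != ord_max :> 'I_k.+2) by [].
move=> h; move: h3; have e : #|V| = #|[set: V]| by rewrite cardsT.
lia.
Qed.

Lemma small_ex0 (V : finType) (EH : {set {set V}}) n :
  simple_graph EH -> #|V| <= 2 -> ex n EH = 0.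
Proof.
move=> sH h2; apply/eqP; rewrite -leqn0; apply/bigmax_leqP => E /andP [sE nC].
rewrite leqn0; apply/negPn/negP; rewrite -lt0n => /card_gt0P [e eE].
have /cards2P [a [b [ab ee]]] := forall_inP sE e eE; subst e.
pose g (v : V) := (val (enum_rank v) == 0).
have gi : injective g.
  move=> x y; rewrite /g => e; apply: enum_rank_inj; apply: val_inj.
  have hx : val (enum_rank x) < 2 by exact: (leq_trans (ltn_ord (enum_rank x)) h2).
  have hy : val (enum_rank y) < 2 by exact: (leq_trans (ltn_ord (enum_rank y)) h2).
  move: e hx hy.
  case: (val (enum_rank x) == 0) /eqP; case: (val (enum_rank y) == 0) /eqP => //=; lia.
apply: (negP nC); apply/existsP; exists [ffun v => if g v then a else b].
apply/andP; split.
  apply/injectiveP => x y; rewrite !ffunE.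
  case gx: (g x); case gy: (g y) => e //; first by apply: gi; rewrite gx gy.
  - by move: ab; rewrite e eqxx.
  - by move: ab; rewrite e eqxx.
  - by apply: gi; rewrite gx gy.
apply/forallP => x; apply/forallP => y; apply/implyP => axy.
have ne := adj_neq sH axy.
have gne : g x != g y by apply/negP => /eqP /gi exy; rewrite exy eqxx in ne.
rewrite !ffunE /adj.
by case: (g x) (g y) gne => [] [] //= _; rewrite ?eE // setUC eE.
Qed.

Lemma comb_main (V : finType) (EH : {set {set V}}) n' k t' s :
  simple_graph EH -> connected_graph EH -> bipartite_graph EH -> 2 < #|V| ->
  #|V| <= s -> (t' = 0 \/ 2 * #|V| * t'.+1 <= s) -> k.+2 * t'.+1 <= n'.+1 ->
  ex k.+2 EH * (t'.+1 * t'.+1) <= exstar n'.+1 EH s.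
Proof.
move=> sH cH bH h3 hs ht hmn.
pose P := fun E : {set {set 'I_k.+2}} => simple_graph E && ~~ has_copy EH E.
have P0 : P (E0 k) by rewrite /P E0_simple E0_free.
have [EG PG eG] := @eq_bigmax_cond _ P (fun E => #|E|) (ltac:(by apply/card_gt0P; exists (E0 k))).
rewrite /ex -/P eG.
case/andP: PG => sG nG.
apply: leq_trans (blowup_card sG hmn) _.
apply: leq_bigmax_cond.
by rewrite blowup_simple (blowup_noKss _ bH nG hs ht) // blowup_noind.
Qed.
From Stdlib Require Import Lra.
Local Open Scope R_scope.

Lemma Rpower_pos x y : 0 < Rpower x y.
Proof. unfold Rpower; apply exp_pos. Qed.

Lemma Rpower_two x : 0 < x -> Rpower x 2 = x * x.
Proof.
intro hx. replace 2 with (INR 2) by (simpl; lra).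
rewrite Rpower_pow; auto. simpl; ring.
Qed.

Lemma real_part (al c h s n t m : R) :
  0 < al < 1 -> 0 < c -> 1 <= h -> 1 <= t -> 1 <= m -> 0 < s -> 0 < n ->
  s <= 4 * h * t -> n <= 2 * t * m ->
  c / (16 * h) * Rpower s (1 - al) * Rpower n (1 + al) <= c * (t * t) * Rpower m (1 + al).
Proof.
intros [a0 a1] c0 h1 t1 m1 s0 n0 hs hn.
assert (HA : Rpower s (1 - al) <= 4 * h * Rpower t (1 - al)).
{ apply Rle_trans with (Rpower (4 * h * t) (1 - al)).
  - apply Rle_Rpower_l; lra.
  - rewrite <- Rpower_mult_distr by lra.
    apply Rmult_le_compat_r; [left; apply Rpower_pos|].
    rewrite <- (Rpower_1 (4 * h)) at 2 by lra.
    apply Rle_Rpower; lra. }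
assert (HB : Rpower n (1 + al) <= 4 * (Rpower t (1 + al) * Rpower m (1 + al))).
{ apply Rle_trans with (Rpower (2 * t * m) (1 + al)).
  - apply Rle_Rpower_l; lra.
  - rewrite <- !Rpower_mult_distr by nra.
    rewrite Rmult_assoc.
    apply Rmult_le_compat_r; [left; apply Rmult_lt_0_compat; apply Rpower_pos|].
    replace 4 with (Rpower 2 2) by (rewrite Rpower_two; lra).
    apply Rle_Rpower; lra. }
assert (HT : Rpower t (1 - al) * Rpower t (1 + al) = t * t).
{ rewrite <- Rpower_plus. replace (1 - al + (1 + al)) with 2 by ring.
  apply Rpower_two; lra. }
pose proof (Rpower_pos s (1 - al)) as PA.
pose proof (Rpower_pos n (1 + al)) as PB.
pose proof (Rpower_pos t (1 - al)) as PT1.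
pose proof (Rpower_pos t (1 + al)) as PT2.
pose proof (Rpower_pos m (1 + al)) as PM.
assert (HAB : Rpower s (1 - al) * Rpower n (1 + al) <=
   (4 * h * Rpower t (1 - al)) * (4 * (Rpower t (1 + al) * Rpower m (1 + al)))).
{ apply Rmult_le_compat; lra. }
assert (E : c * (t * t) * Rpower m (1 + al) =
   c / (16 * h) * ((4 * h * Rpower t (1 - al)) * (4 * (Rpower t (1 + al) * Rpower m (1 + al))))).
{ rewrite <- HT. field. lra. }
rewrite E Rmult_assoc.
apply Rmult_le_compat_l; [|exact HAB].
apply Rlt_le, Rdiv_lt_0_compat; lra.
Qed.
Local Close Scope R_scope.

Lemma step_t (V : finType) (EH : {set {set V}}) (alpha c2 : R) n s t :
  simple_graph EH -> connected_graph EH -> bipartite_graph EH -> 2 < #|V| ->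
  (0 < alpha < 1)%R -> (0 < c2)%R ->
  (forall m, 2 <= m -> (c2 * Rpower (INR m) (1 + alpha) <= INR (ex m EH))%R) ->
  #|V| <= s -> s <= n -> 1 <= t -> 2 * t <= n -> (t = 1 \/ 2 * #|V| * t <= s) ->
  s <= 4 * #|V| * t ->
  (c2 / (16 * INR #|V|) * Rpower (INR s) (1 - alpha) * Rpower (INR n) (1 + alpha)
     <= INR (exstar n EH s))%R.
Proof.
move=> sH cH bH h3 al c2pos B hs hsn t1 t2n ht hst.
have mt : n %/ t * t <= n by apply: leq_divM.
have nlt : n < (n %/ t).+1 * t by apply: ltn_ceil.
have m2 : 2 <= n %/ t by rewrite leq_divRL.
have n2 : n <= 2 * t * (n %/ t) by nia.
case: n hs hsn t2n mt nlt m2 n2 => [|n'] hs hsn t2n mt nlt m2 n2; first by lia.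
case: t t1 t2n ht hst mt nlt m2 n2 => [|t'] // _ t2n ht hst mt nlt m2 n2.
move: mt nlt m2 n2; set m := n'.+1 %/ t'.+1 => mt nlt m2 n2.
case: m mt nlt m2 n2 => [|[|k]] // mt nlt _ n2.
have ht' : t' = 0 \/ 2 * #|V| * t'.+1 <= s by case: ht => [[->]|]; [left|right].
have C := comb_main sH cH bH h3 (leq_trans hs (leqnn s)) ht' (mt : k.+2 * t'.+1 <= n'.+1).
have hV : (1 <= INR #|V|)%R by apply: (le_INR 1); apply/leP; lia.
have hsR : (INR s <= 4 * INR #|V| * INR t'.+1)%R.
  have := le_INR _ _ (elimT leP hst); rewrite !mult_INR.
  by have -> : INR 4 = 4%R by simpl; lra.
have hnR : (INR n'.+1 <= 2 * INR t'.+1 * INR k.+2)%R.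
  have := le_INR _ _ (elimT leP n2); rewrite !mult_INR.
  by have -> : INR 2 = 2%R by simpl; lra.
have tR : (1 <= INR t'.+1)%R by apply: (le_INR 1); apply/leP; lia.
have mR : (1 <= INR k.+2)%R by apply: (le_INR 1); apply/leP; lia.
have sR : (0 < INR s)%R by apply: lt_0_INR; apply/ltP; lia.
have nR : (0 < INR n'.+1)%R by apply: lt_0_INR; apply/ltP; lia.
apply: Rle_trans (real_part al c2pos hV tR mR sR nR hsR hnR) _.
have BB := B k.+2 (isT : 2 <= k.+2).
apply: Rle_trans (le_INR _ _ (elimT leP C)).
rewrite !mult_INR.
have := pos_INR t'.+1; nra.
Qed.

Theorem proposition1p4 (V : finType) (EH : {set {set V}}) (alpha : R) :
  simple_graph EH -> connected_graph EH -> bipartite_graph EH ->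
  (0 < alpha < 1)%R ->
  (exists c : R, (0 < c)%R /\ exists N : nat, forall n : nat, (N <= n)%N ->
     (c * Rpower (INR n) (1 + alpha) <= INR (ex n EH))%R) ->
  exists c : R, (0 < c)%R /\
    forall n s : nat, (#|V| <= s)%N -> (s <= n)%N ->
      (c * Rpower (INR s) (1 - alpha) * Rpower (INR n) (1 + alpha)
         <= INR (exstar n EH s))%R.
Proof.
move=> sH cH bH al [c [cpos [N hN]]].
case: (leqP #|V| 2) => hV.
  exfalso; have := hN N (leqnn N); rewrite small_ex0 //=.
  have := Rpower_pos (INR N) (1 + alpha); nra.
pose c2 := Rmin c (/ (INR N * INR N + 1)).
have NN : (0 < INR N * INR N + 1)%R by have := pos_INR N; nra.
have c2pos : (0 < c2)%R by apply: Rmin_glb_lt => //; apply: Rinv_0_lt_compat.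
have B : forall m, 2 <= m -> (c2 * Rpower (INR m) (1 + alpha) <= INR (ex m EH))%R.
  move=> m hm.
  case: (leqP N m) => hNm.
    apply: Rle_trans (hN m hNm); apply: Rmult_le_compat_r; last exact: Rmin_l.
    by left; apply: Rpower_pos.
  have ex1 : 1 <= ex m EH.
    case: m hm hNm => [|[|k]] // _ _.
    have := @leq_bigmax_cond _ (fun E : {set {set 'I_k.+2}} => simple_graph E && ~~ has_copy EH E)
       (fun E => #|E|) (E0 k).
    by rewrite E0_simple E0_free // E0_card; apply.
  have R1 : (1 <= INR (ex m EH))%R by apply: (le_INR 1); apply/leP.
  have mR : (1 <= INR m)%R by apply: (le_INR 1); apply/leP; lia.
  have mN : (INR m <= INR N)%R by apply: le_INR; apply/leP; lia.
  have P2 : (Rpower (INR m) (1 + alpha) <= INR N * INR N + 1)%R.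
    apply: Rle_trans (_ : Rpower (INR m) 2 <= _)%R.
      by apply: Rle_Rpower => //; case: al => _ ?; lra.
    rewrite Rpower_two; last lra.
    nra.
  have c2le : (c2 <= / (INR N * INR N + 1))%R by apply: Rmin_r.
  have PP := Rpower_pos (INR m) (1 + alpha).
  apply: Rle_trans R1.
  apply: Rle_trans (_ : / (INR N * INR N + 1) * (INR N * INR N + 1) <= 1)%R.
    apply: Rmult_le_compat => //; first lra; first lra.
  by rewrite Rinv_l; [lra | lra].
exists (c2 / (16 * INR #|V|))%R; split.
  apply: Rdiv_lt_0_compat => //.
  have : (1 <= INR #|V|)%R by apply: (le_INR 1); apply/leP; lia.
  lra.
move=> n s hs hsn.
case: (ltnP s (2 * #|V|)) => hsh.
  apply: (step_t sH cH bH hV al c2pos B hs hsn (t := 1)) => //; try lia.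
apply: (step_t sH cH bH hV al c2pos B hs hsn (t := s %/ (2 * #|V|))).
- by rewrite leq_divRL ?mul1n //; lia.
- have := leq_divM s (2 * #|V|); nia.
- by right; rewrite mulnC; apply: leq_divM.
- have d0 : 0 < 2 * #|V| by lia.
  have t1 : 1 <= s %/ (2 * #|V|) by rewrite leq_divRL // mul1n.
  have := ltn_ceil s d0; move: t1; set t := s %/ _ => t1 h1; nia.
Qed.
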